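(* Let $\kappa<\Gamma$ be infinite cardinals. Then the Banach space $X^{\kappa,\Gamma}$ fails the ball fixed point property.
   Context: Cardinals are identified with initial ordinals, and an ordinal is the set of smaller ordinals. $\ell_\infty(\Gamma)$ is the Banach space of bounded functions $f\colon\Gamma\to\mathbb{R}$ with $\|f\|_\infty=\sup_{\gamma\in\Gamma}|f(\gamma)|$. $[\Gamma]^\kappa$ is the family of subsets of $\Gamma$ of cardinality $\kappa$. Define $X^{\kappa,\Gamma}=\{f\in\ell_\infty(\Gamma):\exists A\in[\Gamma]^\kappa \text{ such that } f|_{\Gamma\setminus A}\text{ is constant}\}$, a closed linear subspace of $\ell_\infty(\Gamma)$ with the sup norm. A real Banach space $X$ has the ball fixed point property (BFPP) if every nonexpansive map $T\colon B_X\to B_X$ (i.e. $\|Tx-Ty\|\le\|x-y\|$) has a fixed point, where $B_X$ is the closed unit ball. *)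

(* Defs.v *)
From HB Require Import structures.
From mathcomp Require Import all_boot all_order all_algebra.
From mathcomp Require Import all_classical all_reals.

Import Order.TTheory GRing.Theory Num.Theory.
Local Open Scope classical_set_scope.
Local Open Scope ring_scope.
Local Open Scope card_scope.

(* Cardinals are modelled by types: Gamma is (a type of cardinality) Γ,
   kappa a type of cardinality κ.  Only cardinalities matter. *)

Definition bounded_fun (R : realType) (G : Type) (f : G -> R) : Prop :=
  exists M : R, forall g, `|f g| <= M.

Definition supnorm (R : realType) (G : Type) (f : G -> R) : R :=
  sup (range (fun g => `|f g|)).

Definition Xspace (R : realType) (K G : Type) (f : G -> R) : Prop :=
  bounded_fun R G f /\
  exists A : set G, A #= [set: K] /\
    exists c : R, forall g, ~ A g -> f g = c.

Definition unit_ball (R : realType) (K G : Type) (f : G -> R) : Prop :=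
  Xspace R K G f /\ supnorm R G f <= 1.

Definition has_BFPP (R : realType) (K G : Type) : Prop :=
  forall T : (G -> R) -> (G -> R),
    (forall x, unit_ball R K G x -> unit_ball R K G (T x)) ->
    (forall x y, unit_ball R K G x -> unit_ball R K G y ->
       supnorm R G (T x \- T y) <= supnorm R G (x \- y)) ->
    exists x, unit_ball R K G x /\ T x = x.

(* Main.v *)
Require Import Defs.
From HB Require Import structures.
From mathcomp Require Import all_boot all_order all_algebra.
From mathcomp Require Import all_classical all_reals.
From mathcomp Require Import wochoice zify ring lra.
Import Order.TTheory GRing.Theory Num.Theory.
Local Open Scope classical_set_scope.
Local Open Scope card_scope.

Lemma cardKP (T K : Type) (k : K) (A : set T) : (A #<= [set: K]) <-> exists f : T -> K, {in A &, injective f}.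
Proof.
elim/Ppointed: K k => K k.
  by case: (no k).
split; [by move/pcard_injP | by move=> h; apply/pcard_injP].
Qed.

Lemma cardKP2 (T K : Type) (k : K) (A : set T) (B : set K) : (A #<= B) ->
   exists f : T -> K, (forall x, A x -> B (f x)) /\ {in A &, injective f}.
Proof.
elim/Ppointed: K k B => K k B.
  by case: (no k).
move/pcard_leP => /injfunPex [f hf1 hf2]; by exists f.
Qed.

Arguments cardKP {T K}. Arguments cardKP2 {T K}.
Lemma nat2 (a a' : nat) (b c : bool) : (2 * a + b = 2 * a' + c)%N -> a = a' /\ b = c.
Proof. by case: b; case: c => /= h; split => //; lia. Qed.

Record st (K : Type) := St { sS : set K; sg : K -> bool -> K;
  sinj : forall x y b c, sS x -> sS y -> sg x b = sg y c -> x = y /\ b = c;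
  sinto : forall x b, sS x -> sS (sg x b) }.
Arguments sS {K}. Arguments sg {K}. Arguments St {K sS sg}.

Definition Rle (K : Type) (s t : st K) : bool :=
  `[< sS s `<=` sS t /\ forall x b, sS s x -> sg t x b = sg s x b >].
Arguments Rle {K}.

Section Chain.
Variables (K : Type) (A : set (st K)).
Hypothesis tot : total_on A (@Rle K).

Definition gu (x : K) (b : bool) : K :=
  match pselect (exists s, A s /\ sS s x) with
  | left p => sg (proj1_sig (cid p)) x b
  | right _ => x end.

Lemma gu_key s x b : A s -> sS s x -> gu x b = sg s x b.
Proof.
move=> As Sx; rewrite /gu; case: pselect => [p|np]; last by exfalso; apply: np; exists s.
case: (cid p) => s' [As' Sx'] /=.
case: (tot _ _ As As') => /asboolP [sub agr].
  by rewrite agr.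
by rewrite agr.
Qed.

Definition US := [set x | exists s, A s /\ sS s x].

Lemma gu_inj x y b c : US x -> US y -> gu x b = gu y c -> x = y /\ b = c.
Proof.
move=> [s1 [A1 S1]] [s2 [A2 S2]].
case: (tot _ _ A1 A2) => /asboolP [sub agr].
  rewrite (gu_key _ _ b A2 (sub _ S1)) (gu_key _ _ c A2 S2).
  by apply: sinj => //; apply: sub.
rewrite (gu_key _ _ b A1 S1) (gu_key _ _ c A1 (sub _ S2)).
by apply: sinj => //; apply: sub.
Qed.

Lemma gu_into x b : US x -> US (gu x b).
Proof. move=> [s [As Sx]]; rewrite (gu_key _ _ b As Sx); exists s; split => //; exact: sinto. Qed.

Definition ust := St gu_inj gu_into.

Lemma ust_ub s : A s -> Rle s ust.
Proof.
move=> As; apply/asboolP; split.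
  by move=> x Sx; exists s.
by move=> x b Sx /=; rewrite (gu_key _ _ b As Sx).
Qed.
End Chain.

Lemma double (K : Type) : infinite_set [set: K] ->
  exists h : K -> bool -> K, forall x b y c, h x b = h y c -> x = y /\ b = c.
Proof.
move=> hK.
have /cid [k0 _] := infinite_setN0 hK.
have t0inj : forall x y b c, (@set0 K) x -> (@set0 K) y -> (fun x (_ : bool) => x) x b = (fun x (_ : bool) => x) y c -> x = y /\ b = c by [].
have t0into : forall x (b : bool), (@set0 K) x -> (@set0 K) ((fun x (_ : bool) => x) x b) by [].
have [|||t tmax] := @ZL_preorder (st K) (St t0inj t0into) (@Rle K).
- by move=> s; apply/asboolP; split.
- move=> r s t /asboolP [s1 a1] /asboolP [s2 a2]; apply/asboolP; split.
    by move=> x /s1 /s2.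
  by move=> x b Rx; rewrite a2 ?a1 //; apply: s1.
- by move=> A tot; exists (@ust _ _ tot) => s As; apply: ust_ub.
set S := sS t; set g := sg t.
have Ffin : finite_set (~` S).
  apply: contrapT => /infiniteP /(cardKP2 k0) [e [eF einj]].
  pose inv y := match pselect (exists n, e n = y) with left p => proj1_sig (cid p) | right _ => 0%N end.
  have invK n : inv (e n) = n.
    rewrite /inv; case: pselect => [p|np]; last by exfalso; apply: np; exists n.
    case: (cid p) => m /= hm; exact: (einj _ _ (mem_setT _) (mem_setT _) hm).
  pose g' y b := if pselect (S y) then g y b else e (2 * inv y + b)%N.
  pose S' := S `|` range e.
  have g'inj : forall x y b c, S' x -> S' y -> g' x b = g' y c -> x = y /\ b = c.
    move=> x y b c Sx Sy; rewrite /g'.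
    case: pselect => [Sx1|nSx] /=; case: pselect => [Sy1|nSy] /=.
    - exact: sinj.
    - by case: Sy => // -[n _ <-] h; exfalso; apply: (eF (2 * inv (e n) + c)%N I); rewrite -h; apply: sinto.
    - by case: Sx => // -[n _ <-] h; exfalso; apply: (eF (2 * inv (e n) + b)%N I); rewrite h; apply: sinto.
    - case: Sx => // -[n _ <-]; case: Sy => // -[m _ <-].
      rewrite !invK => /(einj _ _ (mem_setT _) (mem_setT _)) /nat2 [-> ->]; by [].
  have g'into : forall x b, S' x -> S' (g' x b).
    move=> x b Sx; rewrite /g'; case: pselect => [Sx1|nSx].
      by left; apply: sinto.
    by right; exists (2 * inv x + b)%N.
  have := tmax (St g'inj g'into).
  have le1 : Rle t (St g'inj g'into).
    apply/asboolP; split; first by move=> x Sx; left.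
    by move=> x b Sx /=; rewrite /g'; case: pselect.
  move=> /(_ le1) /asboolP [sub _].
  have : S (e 0%N) by apply: sub; right; exists 0%N.
  exact: (eF 0%N I).
have Sinf : infinite_set S.
  move=> Sfin; apply: hK; rewrite -(setUv S) finite_setU; by split.
have [e [eS einj]] := cardKP2 k0 _ _ (proj1 (infiniteP S) Sinf).
have [phi phiinj] : exists phi : K -> nat, {in ~` S &, injective phi}.
  apply/(cardKP 0%N); case: Ffin => n /card_eqPle [le1 _].
  apply: card_le_trans le1 _; exact: subset_card_le.
exists (fun y b => if pselect (S y) then g (g y b) false else g (e (2 * phi y + b)%N) true).
move=> x b y c.
case: pselect => [Sx|nSx]; case: pselect => [Sy|nSy].
- move=> E; have [h1 _] := @sinj _ t _ _ _ _ (@sinto _ t _ _ Sx) (@sinto _ t _ _ Sy) E.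
  exact: (@sinj _ t _ _ _ _ Sx Sy h1).
- by move=> E; have [_] := @sinj _ t _ _ _ _ (@sinto _ t _ _ Sx) (eS _ I) E.
- by move=> E; have [_] := @sinj _ t _ _ _ _ (eS _ I) (@sinto _ t _ _ Sy) E.
- move=> E; have [h1 _] := @sinj _ t _ _ _ _ (eS _ I) (eS _ I) E.
  move: h1 => /(einj _ _ (mem_setT _) (mem_setT _)) /nat2 [h2 ->]; split => //.
  by apply: phiinj => //; rewrite in_setE.
Qed.


Definition leK (G K : Type) (X : set G) := exists f : G -> K, {in X &, injective f}.
Arguments leK {G} K X.

Lemma leK_sub (G K : Type) (X Y : set G) : X `<=` Y -> leK K Y -> leK K X.
Proof.
move=> sXY [f hf]; exists f => x y; rewrite !in_setE => hx hy; apply: hf; rewrite in_setE; exact: sXY.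
Qed.

Lemma leK_ss (G K : Type) (k0 : K) (X : set G) : (forall x y, X x -> X y -> x = y) -> leK K X.
Proof. move=> h; exists (fun _ => k0) => x y; rewrite !in_setE => hx hy _; exact: h. Qed.

Lemma leK_map (G K : Type) (X Y : set G) (psi : G -> G) :
  (forall x, X x -> Y (psi x)) -> (forall x y, X x -> X y -> psi x = psi y -> x = y) ->
  leK K Y -> leK K X.
Proof.
move=> hXY hinj [f hf]; exists (fun x => f (psi x)) => x y; rewrite !in_setE => hx hy e.
by apply: hinj => //; apply: hf => //; rewrite in_setE; apply: hXY.
Qed.

Lemma leK_U (G K : Type) (X Y : set G) : infinite_set [set: K] ->
  leK K X -> leK K Y -> leK K (X `|` Y).
Proof.
move=> hK [f hf] [g hg]; have [h hh] := double _ hK.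
exists (fun x => if pselect (X x) then h (f x) false else h (g x) true).
move=> x y; rewrite !in_setE => hx hy.
case: (pselect (X x)) => [Xx|nXx] /=; case: (pselect (X y)) => [Xy|nXy] /= /hh [e1 e2] //.
  by apply: hf => //; rewrite in_setE.
apply: hg => //; rewrite in_setE.
  by case: hx.
by case: hy.
Qed.
Arguments leK_ss {G K} k0 {X}.
Arguments leK_U {G K X Y}.
Arguments leK_map {G K X Y} psi.
Arguments leK_sub {G K X Y}.

Local Open Scope ring_scope.
Section SupLemmas.
Context {R : realType}.

Lemma sup_ub {E : set R} {M x : R} : (forall y, E y -> y <= M) -> E x -> x <= sup E.
Proof. move=> hM Ex; apply: ub_le_sup => //; by exists M. Qed.

Lemma sup_eqc (E : set R) (x0 : R) : E x0 -> (forall x, E x -> x <= x0) -> sup E = x0.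
Proof.
move=> E0 hub; apply/eqP; rewrite eq_le; apply/andP; split.
  by apply: ge_sup; [exists x0 | exact: hub].
exact: (sup_ub hub E0).
Qed.

Lemma sup_le1 (E : set R) : E !=set0 -> (forall x, E x -> `|x| <= 1) -> `|sup E| <= 1.
Proof.
move=> [x0 E0] h; rewrite ler_norml; apply/andP; split.
  apply: (@le_trans _ _ x0); first by have := h _ E0; rewrite ler_norml => /andP[].
  apply: (sup_ub (M := 1)) => // y Ey; by have := h _ Ey; rewrite ler_norml => /andP[].
apply: ge_sup; first by exists x0.
by move=> y Ey; have := h _ Ey; rewrite ler_norml => /andP[].
Qed.

Lemma sup_lip1 (T : Type) (I : set T) (u v : T -> R) (d : R) : I !=set0 ->
  (forall i, I i -> `|v i| <= 1) ->
  (forall i, I i -> `|u i - v i| <= d) -> sup (u @` I) <= sup (v @` I) + d.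
Proof.
move=> [i0 I0] hv huv; apply: ge_sup; first by exists (u i0), i0.
move=> _ [i Ii <-].
have := huv _ Ii; rewrite ler_distl => /andP[_ h].
apply: (le_trans h); rewrite lerD2r.
apply: (sup_ub (M := 1)); last by exists i.
by move=> _ [j Ij <-]; have := hv _ Ij; rewrite ler_norml => /andP[].
Qed.

Lemma sup_lip (T : Type) (I : set T) (u v : T -> R) (d : R) : I !=set0 ->
  (forall i, I i -> `|u i| <= 1) -> (forall i, I i -> `|v i| <= 1) ->
  (forall i, I i -> `|u i - v i| <= d) -> `|sup (u @` I) - sup (v @` I)| <= d.
Proof.
move=> I0 hu hv huv; rewrite ler_distl; apply/andP; split.
  rewrite lerBlDr; apply: sup_lip1 => // i Ii; by rewrite distrC huv.
exact: sup_lip1.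
Qed.

Lemma sup_pm1 (T : Type) (I : set T) (u : T -> R) : I !=set0 ->
  (forall i, I i -> u i = 1 \/ u i = -1) -> sup (u @` I) = 1 \/ sup (u @` I) = -1.
Proof.
move=> [i0 I0] h.
have ub : forall y, (u @` I) y -> y <= 1.
  move=> _ [j Ij <-]; case: (h _ Ij) => ->; lra.
case: (pselect (exists i, I i /\ u i = 1)) => [[i [Ii ui]]|nex].
  left; apply: sup_eqc => //; by exists i.
right; apply: sup_eqc; first by exists i0 => //; case: (h _ I0) => // e; exfalso; apply: nex; exists i0.
move=> _ [j Ij <-]; case: (h _ Ij) => e; last by rewrite e.
by exfalso; apply: nex; exists j.
Qed.
End SupLemmas.

Lemma supnorm_ge (R : realType) (G : Type) (h : G -> R) (M : R) :
  (forall g, `|h g| <= M) -> forall g, `|h g| <= supnorm R G h.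
Proof. move=> hM g; apply: (sup_ub (M := M)); [by move=> _ [a _ <-] | by exists g]. Qed.

Arguments supnorm_ge {R G h M}.

Lemma supnorm_le (R : realType) (G : Type) (g0 : G) (h : G -> R) (d : R) :
  (forall g, `|h g| <= d) -> supnorm R G h <= d.
Proof. move=> hd; apply: ge_sup; [by exists `|h g0|, g0 | by move=> _ [a _ <-]]. Qed.

Arguments supnorm_le {R G} g0 {h d}.

Lemma ball_le1 (R : realType) (K G : Type) (f : G -> R) :
  unit_ball R K G f -> forall g, `|f g| <= 1.
Proof.
move=> [[[M hM] _] hs] g; apply: Order.POrderTheory.le_trans hs.
exact: (supnorm_ge hM).
Qed.

Lemma wo_min (T : eqType) (Rw : rel T) : well_order Rw -> forall P : set T, (exists x, P x) ->
  exists z, P z /\ (forall x, P x -> Rw z x) /\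
    (forall z', P z' -> (forall x, P x -> Rw z' x) -> z' = z).
Proof.
move=> wo P [x Px].
have [|z [[Az lbz] uz]] := wo (fun x => `[< P x >]).
  by exists x; rewrite unfold_in; apply/asboolP.
move: Az; rewrite unfold_in => /asboolP Pz.
exists z; split => //; split.
  move=> y Py; apply: lbz; rewrite unfold_in; exact/asboolP.
move=> z' Pz' lb; apply: esym; apply: uz; split.
  rewrite unfold_in; exact/asboolP.
move=> y; rewrite unfold_in => /asboolP; exact: lb.
Qed.

Lemma wo_props (G : Type) : exists le : G -> G -> Prop,
  (forall x, le x x) /\ (forall x y z, le x y -> le y z -> le x z) /\
  (forall x y, le x y -> le y x -> x = y) /\ (forall x y, le x y \/ le y x) /\
  (forall P : set G, (exists x, P x) -> exists z, P z /\ forall x, P x -> le z x).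
Proof.
have [Rw wo] := well_ordering_principle {classic G}.
have mn := @wo_min _ Rw wo.
have refl : forall x : G, Rw x x.
  move=> x; have [z [Pz [lb _]]] := mn (fun y => y = x) (ex_intro _ x erefl).
  by move: lb; rewrite Pz => /(_ x erefl).
have anti : forall x y : G, Rw x y -> Rw y x -> x = y.
  move=> x y hxy hyx.
  have [z [Pz [lb uz]]] := mn (fun w => w = x \/ w = y) (ex_intro _ x (or_introl erefl)).
  rewrite (uz x (or_introl erefl)); last by move=> w [->|->].
  by rewrite (uz y (or_intror erefl)); last by move=> w [->|->].
have tot : forall x y : G, Rw x y \/ Rw y x.
  move=> x y.
  have [z [Pz [lb uz]]] := mn (fun w => w = x \/ w = y) (ex_intro _ x (or_introl erefl)).
  case: Pz => e; subst z; [left | right]; apply: lb; by [right | left].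
exists (fun x y : G => Rw x y); split => //; split; last split => //; last split => //.
  move=> x y z hxy hyz.
  have [m [Pm [lb _]]] := mn (fun w => w = x \/ w = y \/ w = z) (ex_intro _ x (or_introl erefl)).
  case: Pm => [e|[e|e]]; subst m.
  - by apply: lb; right; right.
  - have e : x = y by apply: anti => //; apply: lb; left.
    by rewrite e.
  - have e : y = z by apply: anti => //; apply: lb; right; left.
    by rewrite -e.
move=> P hP; have [z [Pz [lb _]]] := mn P hP; by exists z.
Qed.

Lemma one_neq_m1 {R : realType} : (1 : R) <> -1.
Proof. move=> h; lra. Qed.

Section Tmap.
Variables (R : realType) (G : Type) (le : G -> G -> Prop).
Hypothesis le_refl : forall x, le x x.
Hypothesis le_trans : forall x y z, le x y -> le y z -> le x z.
Hypothesis le_anti : forall x y, le x y -> le y x -> x = y.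
Hypothesis le_total : forall x y, le x y \/ le y x.
Hypothesis le_min : forall P : set G, (exists x, P x) -> exists z, P z /\ forall x, P x -> le z x.
Variable m0 : G.
Hypothesis m0min : forall x, le m0 x.

Definition lt x y := le x y /\ x <> y.
Definition Sv (f : G -> R) b g := sup [set f a | a in [set a | le b a /\ lt a g]].
Definition Tv (f : G -> R) g := sup [set - Sv f b g | b in [set b | lt b g]].
Definition Tm (f : G -> R) g := if pselect (g = m0) then 1 else Tv f g.

Lemma lt_m0 g : g <> m0 -> lt m0 g.
Proof. by move=> h; split => // e; apply: h. Qed.

Lemma Sv_bound f b g : (forall a, `|f a| <= 1) -> lt b g -> `|Sv f b g| <= 1.
Proof.
move=> hf hb; apply: sup_le1; first by exists (f b), b.
by move=> _ [a _ <-].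
Qed.

Lemma Tv_bound f g : (forall a, `|f a| <= 1) -> g <> m0 -> `|Tv f g| <= 1.
Proof.
move=> hf hg; apply: sup_le1; first by exists (- Sv f m0 g), m0 => //; apply: lt_m0.
by move=> _ [b hb <-]; rewrite normrN; apply: Sv_bound.
Qed.

Lemma Tm_bound f g : (forall a, `|f a| <= 1) -> `|Tm f g| <= 1.
Proof.
move=> hf; rewrite /Tm; case: (pselect (g = m0)) => [e|hg] /=; first by rewrite normr1.
exact: Tv_bound.
Qed.

Lemma Tm_lip f h d : (forall a, `|f a| <= 1) -> (forall a, `|h a| <= 1) ->
  (forall a, `|f a - h a| <= d) -> forall g, `|Tm f g - Tm h g| <= d.
Proof.
move=> hf hh hd g; rewrite /Tm; case: (pselect (g = m0)) => [e|hg] /=.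
  by rewrite subrr normr0 (Order.POrderTheory.le_trans _ (hd m0)).
apply: sup_lip.
- by exists m0; apply: lt_m0.
- by move=> b hb; rewrite normrN; apply: Sv_bound.
- by move=> b hb; rewrite normrN; apply: Sv_bound.
move=> b hb; rewrite -opprD normrN.
by apply: sup_lip => [|a _|a _|a _]; [exists b | exact: hf | exact: hh | exact: hd].
Qed.

Lemma Tm_gen f g b0 c : (forall a, `|f a| <= 1) -> g <> m0 -> lt b0 g ->
  (forall a, le b0 a -> lt a g -> f a = c) -> Tm f g = - c.
Proof.
move=> hf hg hb0 hc; rewrite /Tm; case: (pselect (g = m0)) => [//|ng] /=.
have SvE : Sv f b0 g = c.
  apply: sup_eqc; first by exists b0; [split; [exact: le_refl | exact: hb0] | apply: hc; [exact: le_refl | exact: hb0]].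
  by move=> _ [a ha <-]; rewrite (hc a ha.1 ha.2).
apply: sup_eqc; first by exists b0 => //; rewrite SvE.
move=> _ [b hb <-]; rewrite lerN2.
have [m [hbm [hb0m hmg]]] : exists m, le b m /\ le b0 m /\ lt m g.
  case: (le_total b b0) => h; [exists b0; split; [exact: h | split; [exact: le_refl | exact: hb0]] | exists b; split; [exact: le_refl | split; [exact: h | exact: hb]]].
apply: (sup_ub (M := 1)); last by exists m; [split | exact: hc].
move=> _ [a _ <-]; by have := hf a; rewrite ler_norml => /andP[].
Qed.

Lemma Tm_pm f : (forall g, Tm f g = f g) -> forall g, f g = 1 \/ f g = -1.
Proof.
move=> hfix g; apply: contrapT => ng.
have [z [Pz zmin]] := le_min (fun g => ~ (f g = 1 \/ f g = -1)) (ex_intro _ g ng).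
have below : forall a, lt a z -> f a = 1 \/ f a = -1.
  move=> a [haz naz]; apply: contrapT => na.
  by apply: naz; apply: le_anti => //; apply: zmin.
apply: Pz; rewrite -hfix /Tm; case: (pselect (z = m0)) => [e|hz] /=; first by left.
apply: sup_pm1; first by exists m0; apply: lt_m0.
move=> b hb.
have : Sv f b z = 1 \/ Sv f b z = -1.
  apply: sup_pm1; first by exists b.
  by move=> a [_ ha]; apply: below.
by case=> ->; [right | left; rewrite opprK].
Qed.
Lemma exc (K : Type) (k0 : K) (hK : infinite_set [set: K]) f (A : set G) c :
 (forall a, `|f a| <= 1) -> (forall g, ~ A g -> f g = c) -> leK K A ->
 exists A' : set G, leK K A' /\ A `<=` A' /\ forall g, ~ A' g -> Tm f g = - c.
Proof.
move=> hf hc hA.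
pose E := [set g | g <> m0 /\ forall b, lt b g -> exists a, A a /\ le b a /\ lt a g].
pose E1 := [set g | E g /\ exists a, A a /\ le g a].
pose E2 := [set g | E g /\ forall a, A a -> ~ le g a].
pose psi g := match pselect (exists a, A a /\ le g a) with
  | left p => proj1_sig (cid (le_min _ p)) | right _ => g end.
have psiP g : (exists a, A a /\ le g a) ->
    A (psi g) /\ le g (psi g) /\ forall a, A a /\ le g a -> le (psi g) a.
  rewrite /psi; case: (pselect (exists a, A a /\ le g a)) => [p|//] /= _.
  by case: (cid (le_min _ p)) => z [[Az gz] zmin] /=.
have E1inj : forall x y, E1 x -> E1 y -> psi x = psi y -> x = y.
  suff key : forall x y, E1 x -> E1 y -> lt x y -> psi x <> psi y.
    move=> x y hx hy e; apply: contrapT => nxy.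
    case: (le_total x y) => h.
      exact: (key x y hx hy (conj h nxy)).
    by apply: (key y x hy hx (conj h (fun e' => nxy (esym e')))); rewrite e.
  move=> x y [_ hx] [[_ Ey] hy] hxy e.
  have [a [Aa [xa ay]]] := Ey x hxy.
  have [_ [_ mx]] := psiP x hx.
  have [_ [yp _]] := psiP y hy.
  have := mx a (conj Aa xa); rewrite e => pa.
  case: ay => ay nay; apply: nay; apply: le_anti => //; exact: le_trans yp pa.
have E2ss : forall x y, E2 x -> E2 y -> x = y.
  suff key : forall x y, E2 x -> E2 y -> ~ lt x y.
    move=> x y hx hy; apply: contrapT => nxy; case: (le_total x y) => h.
      exact: (key x y hx hy (conj h nxy)).
    exact: (key y x hy hx (conj h (fun e => nxy (esym e)))).
  move=> x y [_ hx] [[_ Ey] _] hxy.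
  have [a [Aa [xa _]]] := Ey x hxy; exact: (hx a Aa xa).
exists (A `|` E `|` [set m0]); split; [|split].
- apply: leK_U => //; last by apply: (leK_ss k0) => x y -> ->.
  apply: leK_U => //.
  apply: (leK_sub (Y := E1 `|` E2)).
    move=> g Eg; case: (pselect (exists a, A a /\ le g a)) => h; [left | right]; split => //.
    move=> a Aa ga; apply: h; by exists a.
  apply: leK_U => //; last exact: (leK_ss k0).
  apply: (leK_map psi) => [x [_ hx]||]; [exact: (psiP x hx).1 | exact: E1inj | exact: hA].
- by move=> x Ax; left; left.
- move=> g ng.
  have gm0 : g <> m0 by move=> e; apply: ng; right.
  have nEg : ~ E g by move=> Eg; apply: ng; left; right.
  have [b [hb hnb]] : exists b, lt b g /\ ~ exists a, A a /\ le b a /\ lt a g.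
    apply: contrapT => nex; apply: nEg; split => // b hb; apply: contrapT => nn.
    by apply: nex; exists b.
  apply: (@Tm_gen f g b c hf gm0 hb) => a ba ag; apply: hc => Aa; apply: hnb.
  by exists a.
Qed.
Lemma notBFPP (K : Type) (hK : infinite_set [set: K]) (hGK : ~ ([set: G] #<= [set: K])%card) :
  ~ has_BFPP R K G.
Proof.
move=> H; have /cid [k0 _] := infinite_setN0 hK.
have ballb := @ball_le1 R K G.
have setup : forall f, unit_ball R K G f -> exists A' : set G, exists c,
    leK K A' /\ (forall g, ~ A' g -> f g = c /\ Tm f g = - c) /\ ([set: K] #<= A')%card.
  move=> f hf; have hb := ballb f hf.
  case: hf => [[_ [A [HA [c Hc]]]] _].
  have [HA1 HA2] : (A #<= [set: K])%card /\ ([set: K] #<= A)%card by apply/card_eqPle.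
  have hA : leK K A by apply/(cardKP k0).
  have [A' [hA' [sub hoff]]] := @exc K k0 hK f A c hb Hc hA.
  exists A', c; split => //; split.
    by move=> g ng; split; [apply: Hc => Ag; apply: ng; apply: sub | exact: hoff].
  by apply: card_le_trans HA2 _; exact: subset_card_le.
have Xmap : forall f, unit_ball R K G f -> unit_ball R K G (Tm f).
  move=> f hf; have hb := ballb f hf.
  have [A' [c [hA' [hoff HA2]]]] := setup f hf.
  split; [split|].
  - by exists 1 => g; exact: Tm_bound.
  - exists A'; split.
      by apply: Cantor_Bernstein => //; apply/(cardKP k0).
    by exists (- c) => g ng; have [] := hoff g ng.
  - by apply: (supnorm_le m0) => g; exact: Tm_bound.
have nexp : forall f h, unit_ball R K G f -> unit_ball R K G h ->
    supnorm R G (Tm f \- Tm h) <= supnorm R G (f \- h).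
  move=> f h hf hh; have bf := ballb f hf; have bh := ballb h hh.
  apply: (supnorm_le m0) => g; apply: Tm_lip => // a.
  apply: (@supnorm_ge R G (f \- h) 2) => b /=.
  have t := ler_normB (f b) (h b); have t1 := bf b; have t2 := bh b; lra.
have [x [hx fixx]] := H _ Xmap nexp.
have [A' [c [hA' [hoff _]]]] := setup x hx.
have [g ng] : exists g, ~ A' g.
  apply: contrapT => nall; apply: hGK; apply/(cardKP k0).
  apply: (leK_sub (Y := A')) hA' => g _; apply: contrapT => ng; apply: nall; by exists g.
have fx : forall a, Tm x a = x a by move=> a; rewrite fixx.
have [xg Tg] := hoff g ng.
have pm := @Tm_pm x fx g.
rewrite fx xg in Tg; rewrite xg in pm.
case: pm => e; rewrite e in Tg; [exact: one_neq_m1 Tg | rewrite opprK in Tg; exact: one_neq_m1 (esym Tg)].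
Qed.
End Tmap.

Theorem mainTheorem6 (R : realType) (K G : Type)
  (hK : infinite_set [set: K])
  (hKG : [set: K] #<= [set: G])
  (hGK : ~ ([set: G] #<= [set: K])) :
  ~ has_BFPP R K G.
Proof.
have /cid [k0 _] := infinite_setN0 hK.
have [g0 _] : exists g0 : G, True.
  apply: contrapT => ng.
  have e : [set: G] = set0 by apply/seteqP; split => x // _; apply: ng; exists x.
  move: hKG; rewrite e => /card_le0P e2.
  by have : [set: K] k0 by []; rewrite e2.
have [le [lrefl [ltrans [lanti [ltot lmin]]]]] := wo_props G.
have [m0 [_ m0min]] := lmin setT (ex_intro _ g0 I).
have m0m : forall x, le m0 x by move=> x; apply: m0min.
exact: (@notBFPP R G le lrefl ltrans lanti ltot lmin m0 m0m K hK hGK).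
Qed.
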